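(* Let $D_8=\langle a,b\mid a^4=b^2=1,\ b^{-1}ab=a^{-1}\rangle$ be the dihedral group of order 8. The following d-identities form a basis of d-identities of $D_8$ (i.e. they all hold in $D_8$, and every group satisfying all of them is isomorphic to a section of $D_8$): (1) $\omega_8=\bigvee_{0\le i<j\le 8}(x_i=x_j)$; (2) $x^4=1$; (3) $(x_1^2=1)\vee(x_2^2=1)\vee(x_3^2=1)\vee(x_1=x_2)\vee(x_1=x_3)\vee(x_2=x_3)$; (4) $\Big[\bigvee_{i\ne j}x_i\in\langle x_j\rangle\Big]\vee\Big[\bigvee_{\sigma\in S_3}x_{\sigma(1)}\in\langle x_{\sigma(2)}x_{\sigma(3)}\rangle\Big]\vee\Big[\bigvee_{\sigma\in S_3}x_{\sigma(1)}x_{\sigma(2)}\in\langle x_{\sigma(2)}x_{\sigma(3)}\rangle\Big]$, with $i,j\in\{1,2,3\}$.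
   Context: A d-identity (disjunctive identity) is a universally quantified formula $\forall x_1\dots x_k\,[(f_1=1)\vee\dots\vee(f_n=1)]$ with the $f_i$ words in the free group on the variables; $u=v$ abbreviates $uv^{-1}=1$. A group satisfies it if it is true for all assignments. For a group $G$, $\mathrm{dvar}(G)$ is the class of groups satisfying every d-identity satisfied by $G$; for finite $G$ it is the class of groups isomorphic to sections (quotients of subgroups) of $G$. A set of d-identities is a basis of d-identities of $G$ if all its members hold in $G$ and every group satisfying them lies in $\mathrm{dvar}(G)$. Notation: ''$u\in\langle v\rangle$'' abbreviates $(u=1)\vee(u=v)\vee(u=v^2)\vee(u=v^3)$. *)

(* Defs.v *)
From Stdlib Require List.
From mathcomp Require Import all_boot all_fingroup extremal.
Set Implicit Arguments. Unset Strict Implicit. Unset Printing Implicit Defensive.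

Record Grp := MkGrp {
  gcar :> Type;
  gmul : gcar -> gcar -> gcar;
  ginv : gcar -> gcar;
  gone : gcar;
  gmulA : forall x y z, gmul x (gmul y z) = gmul (gmul x y) z;
  gmul1 : forall x, gmul gone x = x;
  gmulV : forall x, gmul (ginv x) x = gone
}.

Inductive word := Var of nat | One | Mul of word & word | Inv of word.

Fixpoint weval (T : Type) (mul : T -> T -> T) (inv : T -> T) (one : T)
  (s : nat -> T) (w : word) : T :=
  match w with
  | Var n => s n
  | One => one
  | Mul u v => mul (weval mul inv one s u) (weval mul inv one s v)
  | Inv u => inv (weval mul inv one s u)
  end.

(* A d-identity  forall x, (f_1 = 1) \/ ... \/ (f_n = 1), given by [f_1;..;f_n]. *)
Notation didentity := (seq word).

Definition holds (G : Grp) (d : didentity) : Prop :=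
  forall s : nat -> G, exists2 w, List.In w d & weval (@gmul G) (@ginv G) (@gone G) s w = @gone G.

Definition fholds (gT : finGroupType) (d : didentity) : Prop :=
  forall s : nat -> gT, exists2 w, List.In w d & weval (fun x y : gT => (x * y)%g) (fun x : gT => (x^-1)%g) (1%g : gT) s w = 1%g.

(* u = v abbreviates u v^{-1} = 1 *)
Definition weq (u v : word) : word := Mul u (Inv v).
(* u \in <v> abbreviates (u=1) \/ (u=v) \/ (u=v^2) \/ (u=v^3) *)
Definition wmem (u v : word) : seq word :=
  [:: u; weq u v; weq u (Mul v v); weq u (Mul (Mul v v) v)].

Definition omega8 : didentity :=
  flatten [seq [seq weq (Var i) (Var j) | j <- iota i.+1 (8 - i)] | i <- iota 0 9].

Definition id2 : didentity :=
  [:: Mul (Mul (Var 0) (Var 0)) (Mul (Var 0) (Var 0))].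

Definition id3 : didentity :=
  [:: Mul (Var 1) (Var 1); Mul (Var 2) (Var 2); Mul (Var 3) (Var 3);
      weq (Var 1) (Var 2); weq (Var 1) (Var 3); weq (Var 2) (Var 3)].

Definition perms3 : seq (nat * nat * nat) :=
  [:: (1,2,3); (1,3,2); (2,1,3); (2,3,1); (3,1,2); (3,2,1)].

Definition id4 : didentity :=
  flatten (flatten [seq [seq (if i == j then [::] else wmem (Var i) (Var j)) | j <- [:: 1; 2; 3]]
          | i <- [:: 1; 2; 3]]) ++
  flatten [seq (let: (a, b, c) := p in wmem (Var a) (Mul (Var b) (Var c))) | p <- perms3] ++
  flatten [seq (let: (a, b, c) := p in
                wmem (Mul (Var a) (Var b)) (Mul (Var b) (Var c))) | p <- perms3].

Definition iso_section (gT0 : finGroupType) (G : Grp) : Prop :=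
  exists (H K : {group gT0}), (K <| H)%g /\
  exists f : G -> coset_of K,
    [/\ injective f,
        forall x, f x \in (H / K)%g,
        forall y, y \in (H / K)%g -> exists x, f x = y
      & forall x y, f (gmul x y) = (f x * f y)%g].

(* Main.v *)
Require Import Defs.
From HB Require Import structures.
From mathcomp Require Import all_boot all_fingroup extremal.
From mathcomp Require Import cyclic.
From mathcomp Require Import zify.
From Stdlib Require Import Classical ClassicalEpsilon.
Set Implicit Arguments. Unset Strict Implicit. Unset Printing Implicit Defensive.

Section GrpTheory.
Variable G : Grp.
Implicit Types x y z : G.
Local Notation "x ** y" := (gmul x y) (at level 40, left associativity).
Local Notation e := (gone G).

Lemma gmulVr x : x ** ginv x = e.
Proof.
have h: x ** ginv x = ginv (ginv x) ** ginv x ** (x ** ginv x) by rewrite gmulV gmul1.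
by rewrite h -gmulA (gmulA (ginv x)) gmulV gmul1 gmulV.
Qed.

Lemma gmul1r x : x ** e = x.
Proof. by rewrite -(gmulV x) gmulA gmulVr gmul1. Qed.

Lemma gmulI x y z : x ** y = x ** z -> y = z.
Proof. by move=> h; rewrite -(gmul1 y) -(gmulV x) -gmulA h gmulA gmulV gmul1. Qed.

Lemma gmulIr x y z : y ** x = z ** x -> y = z.
Proof. by move=> h; rewrite -(gmul1r y) -(gmulVr x) gmulA h -gmulA gmulVr gmul1r. Qed.

Lemma eq_mulV x y : x ** ginv y = e -> x = y.
Proof. by move=> h; rewrite -(gmul1r x) -(gmulV y) gmulA h gmul1. Qed.

Lemma inv_uniq x y : x ** y = e -> ginv x = y.
Proof. by move=> h; apply: (@gmulI x); rewrite gmulVr h. Qed.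

Lemma inv_uniql x y : y ** x = e -> y = ginv x.
Proof. by move=> h; rewrite -(gmul1r y) -(gmulVr x) gmulA h gmul1. Qed.

Lemma ginvK x : ginv (ginv x) = x.
Proof. exact: inv_uniq (gmulV x). Qed.

Lemma ginvM x y : ginv (x ** y) = ginv y ** ginv x.
Proof.
by apply: inv_uniq; rewrite -gmulA (gmulA y) gmulVr gmul1 gmulVr.
Qed.

Fixpoint gpow x n := if n is n'.+1 then x ** gpow x n' else e.

Lemma gpowD x m n : gpow x (m + n) = gpow x m ** gpow x n.
Proof. by elim: m => [|m IH]; rewrite ?add0n ?gmul1 // addSn /= IH gmulA. Qed.

Lemma gpowM x m n : gpow x (n * m) = gpow (gpow x m) n.
Proof. by elim: n => [|n IH] //; rewrite mulSn gpowD IH. Qed.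

Lemma gpow1 n : gpow e n = e.
Proof. by elim: n => //= n ->; rewrite gmul1. Qed.

Lemma gpow_mod x k n : gpow x k = e -> gpow x n = gpow x (n %% k).
Proof.
by move=> h; rewrite {1}(divn_eq n k) gpowD gpowM h gpow1 gmul1.
Qed.

End GrpTheory.

Lemma weval_hom (T : Type) (mul : T -> T -> T) (inv : T -> T) (one : T)
  (G : Grp) (h : T -> G) :
  (forall p q, h (mul p q) = gmul (h p) (h q)) ->
  (forall p, h (inv p) = ginv (h p)) -> h one = gone G ->
  forall s w, weval (@gmul G) (@ginv G) (gone G) (fun n => h (s n)) w
              = h (weval mul inv one s w).
Proof.
move=> hM hV h1 s; elim=> [n||u IHu v IHv|u IHu] //=.
- by rewrite IHu IHv hM.
- by rewrite IHu hV.
Qed.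

Fixpoint wvars (w : word) : seq nat :=
  match w with
  | Var n => [:: n] | One => [::]
  | Mul u v => wvars u ++ wvars v | Inv u => wvars u end.

Lemma weval_ext (T : Type) (mul : T -> T -> T) (inv : T -> T) (one : T) s s' w :
  (forall n, n \in wvars w -> s n = s' n) ->
  weval mul inv one s w = weval mul inv one s' w.
Proof.
elim: w => [n||u IHu v IHv|u IHu] /= h.
- by apply: h; rewrite inE.
- by [].
- rewrite IHu ?IHv // => n hn; apply: h; rewrite mem_cat hn ?orbT //.
- by rewrite IHu.
Qed.

Lemma word_eq_dec : forall u v : word, {u = v} + {u <> v}.
Proof. decide equality; apply: PeanoNat.Nat.eq_dec. Defined.
HB.instance Definition _ := hasDecEq.Build word (compareP word_eq_dec).

Lemma InP (s : seq word) w : List.In w s <-> w \in s.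
Proof.
elim: s => [|x s IH] //=; rewrite inE; split.
- by case=> [->|/IH ->]; rewrite ?eqxx ?orbT.
- by case/orP=> [/eqP->|/IH]; auto.
Qed.

Lemma omega8_inv w : List.In w omega8 ->
  exists i j, [/\ i < j, j <= 8 & w = weq (Var i) (Var j)].
Proof.
move/InP/flattenP=> [s /mapP[i hi ->] /mapP[j hj ->]].
exists i, j; move: hi hj; rewrite !mem_iota => /andP[_ hi] /andP[hj1 hj2].
split=> //; lia.
Qed.

Lemma omega8_mem i j : i < j -> j <= 8 -> List.In (weq (Var i) (Var j)) omega8.
Proof.
move=> hij hj; apply/InP/flattenP.
exists [seq weq (Var i) (Var j) | j <- iota i.+1 (8 - i)].
  by apply/mapP; exists i => //; rewrite mem_iota; lia.
by apply/mapP; exists j => //; rewrite mem_iota; lia.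
Qed.

Definition cmul (c d : nat * nat) : nat * nat :=
  ((c.1 + d.1 * (if odd c.2 then 3 else 1)) %% 4, (c.2 + d.2) %% 2).
Definition cinv (c : nat * nat) : nat * nat :=
  if odd c.2 then (c.1, 1) else ((4 - c.1 %% 4) %% 4, 0).
Definition cone : nat * nat := (0, 0).
Definition cnorm (c : nat * nat) := (c.1 < 4) && (c.2 < 2).
Definition codes8 : seq (nat * nat) :=
  [:: (0,0); (1,0); (2,0); (3,0); (0,1); (1,1); (2,1); (3,1)].

Lemma cnormE c : cnorm c = (c \in codes8).
Proof.
case: c => i j; apply/idP/idP.
  by case/andP; case: i => [|[|[|[|i]]]] //; case: j => [|[|j]].
by move: (i, j); apply/allP.
Qed.

Lemma cmul_norm c d : cnorm (cmul c d).
Proof. by rewrite /cnorm /= !ltn_mod. Qed.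

Section Psi.
Variables (G : Grp) (a b : G).
Local Notation "x ** y" := (gmul x y) (at level 40, left associativity).
Local Notation e := (gone G).

Definition psi (c : nat * nat) := gpow a c.1 ** gpow b c.2.

Hypotheses (ha4 : gpow a 4 = e) (hb2 : b ** b = e).

Lemma gpowb n : gpow b n = gpow b (n %% 2).
Proof. by apply: gpow_mod; rewrite /= gmul1r. Qed.

Lemma psi_one : psi cone = e.
Proof. by rewrite /psi /= gmul1. Qed.

Lemma psiM0 c d : c.2 = 0 -> psi (cmul c d) = psi c ** psi d.
Proof.
case: c => i j /= ->; case: d => k l.
rewrite /psi /cmul /= muln1 add0n -gpowb -(gpow_mod _ ha4) gmul1r gpowD.
by rewrite gmulA.
Qed.

Hypothesis hab : (a ** b) ** (a ** b) = e.

Lemma ba_rel : b ** a = gpow a 3 ** b.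
Proof.
have h3 : ginv a = gpow a 3 by exact: (inv_uniq ha4).
have h : b ** (a ** b) = gpow a 3.
  by rewrite -h3; symmetry; apply: inv_uniq; move: hab; rewrite !gmulA.
by rewrite -h -(gmul1r (b ** a)) -hb2 !gmulA.
Qed.

Lemma b_apow k : b ** gpow a k = gpow a (3 * k) ** b.
Proof.
elim: k => [|k IH]; first by rewrite muln0 /= gmul1 gmul1r.
rewrite mulnS gpowD -[gpow a k.+1]/(a ** gpow a k) gmulA ba_rel -gmulA IH !gmulA.
by [].
Qed.

Lemma bpow_apow j k :
  gpow b j ** gpow a k = gpow a (k * (if odd j then 3 else 1)) ** gpow b j.
Proof.
elim: j => [|j IH]; first by rewrite /= muln1 gmul1 gmul1r.
rewrite /= -gmulA IH gmulA b_apow -gmulA.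
congr (_ ** _); rewrite (gpow_mod _ ha4) [in RHS](gpow_mod _ ha4).
by case: (odd j) => /=; congr gpow; lia.
Qed.

Lemma psiM c d : psi (cmul c d) = psi c ** psi d.
Proof.
case: c => i j; case: d => k l.
rewrite /psi /cmul /= -(gpow_mod _ ha4) -gpowb.
rewrite -gmulA (gmulA (gpow b j)) bpow_apow -!gmulA !gpowD !gmulA.
by [].
Qed.

Lemma psiV c : psi (cinv c) = ginv (psi c).
Proof.
apply: inv_uniql; rewrite -psiM -psi_one; congr psi.
case: c => i j; rewrite /cinv /cmul /cone /=.
case hj: (odd j) => /=; congr pair.
- lia.
- by rewrite modn2 /= oddD hj.
- lia.
- by rewrite modn2 /= hj.
Qed.

Lemma weval_psi s w :
  weval (@gmul G) (@ginv G) (gone G) (fun n => psi (s n)) w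
  = psi (weval cmul cinv cone s w).
Proof. by apply: weval_hom; [exact: psiM | exact: psiV | exact: psi_one]. Qed.

Definition faithful := forall c, cnorm c -> psi c = e -> c = cone.

Lemma psi_inj : faithful -> forall c d, cnorm c -> cnorm d -> psi c = psi d -> c = d.
Proof.
move=> hf c d hc hd h.
have h0 : cmul (cinv c) d = cone.
  apply: hf; first exact: cmul_norm.
  by rewrite psiM psiV h gmulV.
rewrite cnormE in hc; rewrite cnormE in hd; move: c d hc hd h0 {h}.
have chk : all (fun c => all (fun d => (cmul (cinv c) d == cone) ==> (c == d)) codes8) codes8.
  by vm_compute.
move=> c d hc hd h0; move/allP/(_ c hc)/allP/(_ d hd): chk.
by rewrite h0 eqxx => /eqP.
Qed.

Lemma surj8 : holds G omega8 -> faithful -> forall z, exists c, cnorm c /\ psi c = z.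
Proof.
move=> ho hf z; apply: NNPP => hn.
pose s n := if n < 8 then psi (nth cone codes8 n) else z.
have [w /omega8_inv [i [j [hij hj ->]]]] := ho s.
rewrite /= => /eq_mulV; rewrite /s.
have hi : i < 8 by lia.
rewrite hi; case: ltnP => hj8 h.
- have := psi_inj hf _ _ h.
  rewrite !cnormE !mem_nth // => /(_ isT isT) /eqP.
  apply/negP; move: i j hi hj8 hij {hj h}.
  have chk : all (fun i => all (fun j => (i < j) ==> (nth cone codes8 i != nth cone codes8 j)) (iota 0 8)) (iota 0 8) by vm_compute.
  move=> i j hi hj hij; move/allP: chk => /(_ i); rewrite mem_iota => /(_ hi).
  by move/allP => /(_ j); rewrite mem_iota => /(_ hj); rewrite hij.
- apply: hn; exists (nth cone codes8 i); split=> //.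
  by rewrite cnormE mem_nth.
Qed.

End Psi.

Lemma D8_gens : exists x y : 'D_8,
  [/\ #|'D_8| = 8, #[x]%g = 4, #[y]%g = 2, (x ^ y = x^-1)%g & y \notin <[x]>%g].
Proof.
have := @generators_2dihedral _ [set: 'D_8]%G 3 isT.
case=> [|[x y] [oG _ ox /setDP[_ nyx]] [oy xy]]; first exact: isog_refl.
exists x, y; split => //; by move: oG; rewrite /= cardsT.
Qed.

Definition isone (G : Grp) (g : G) : bool :=
  if excluded_middle_informative (g = gone G) then true else false.
Lemma isoneP (G : Grp) (g : G) : reflect (g = gone G) (isone g).
Proof. by rewrite /isone; case: excluded_middle_informative => h; constructor. Qed.

Section Sec.
Local Open Scope group_scope.
Variables (G : Grp) (H : {group 'D_8}) (pi : 'D_8 -> G).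
Local Notation "x ** y" := (gmul x y) (at level 40, left associativity).
Local Notation e := (gone G).
Hypothesis piM : forall u v, u \in H -> v \in H -> pi (u * v)%g = pi u ** pi v.
Hypothesis surj : forall g, exists u, u \in H /\ pi u = g.

Lemma pi1 : pi 1%g = e.
Proof.
have h := piM (group1 H) (group1 H); rewrite mulg1 in h.
by apply: (@gmulI _ (pi 1%g)); rewrite -h gmul1r.
Qed.

Lemma piV u : u \in H -> pi (u^-1)%g = ginv (pi u).
Proof.
move=> hu; apply: inv_uniql; rewrite -piM ?groupV // mulVg; exact: pi1.
Qed.

Definition Kset := [set u in H | isone (pi u)].

Lemma Kgs : group_set Kset.
Proof.
apply/group_setP; split; first by rewrite inE group1 /=; apply/isoneP; exact: pi1.
move=> u v; rewrite !inE => /andP[uH /isoneP pu] /andP[vH /isoneP pv].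
by rewrite groupM //=; apply/isoneP; rewrite piM // pu pv gmul1.
Qed.
Definition Kg := Group Kgs.

Lemma KH : Kg \subset H.
Proof. by apply/subsetP => u; rewrite inE => /andP[]. Qed.

Lemma HN : H \subset 'N(Kg).
Proof.
apply/subsetP => h hH; rewrite inE; apply/subsetP => u; rewrite mem_conjg.
rewrite !inE => /andP[hu /isoneP pu].
have uH : u \in H by rewrite -(conjgKV h u) groupJ.
rewrite uH /=; apply/isoneP; move: pu.
rewrite conjgE invgK !piM ?groupM ?groupV // piV // => /inv_uniq h1.
by apply: (@gmulIr _ (ginv (pi h))); rewrite gmul1 -h1.
Qed.

Lemma nKH : Kg <| H.
Proof. by rewrite /normal KH HN. Qed.

Lemma keyK u v : u \in H -> v \in H -> (coset Kg u = coset Kg v <-> pi u = pi v).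
Proof.
move=> uH vH; have uN := subsetP HN u uH; have vN := subsetP HN v vH.
split.
- move/(rcoset_kercosetP uN vN); rewrite mem_rcoset inE => /andP[_ /isoneP].
  by rewrite piM ?groupV // piV // => /eq_mulV.
- move=> h; apply/(rcoset_kercosetP uN vN); rewrite mem_rcoset inE groupM ?groupV //=.
  by apply/isoneP; rewrite piM ?groupV // piV // h gmulVr.
Qed.

Definition pre (g : G) : dihedral_gtype 8 :=
  proj1_sig (constructive_indefinite_description _ (surj g)).
Lemma preP g : pre g \in H /\ pi (pre g) = g.
Proof. exact: proj2_sig (constructive_indefinite_description _ (surj g)). Qed.

Lemma sec_main : iso_section (dihedral_gtype 8) G.
Proof.
exists H, Kg; split; first exact: nKH.
exists (fun g => coset Kg (pre g)); split.
- move=> g g'; case: (preP g) => h1 e1; case: (preP g') => h2 e2 /(keyK h1 h2); by rewrite e1 e2.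
- by move=> g; apply: mem_quotient; case: (preP g).
- move=> yb /morphimP [u uN uH ->]; exists (pi u).
  by case: (preP (pi u)) => h1 h2; apply/keyK.
- move=> g g'; case: (preP g) => h1 h1'; case: (preP g') => h2 h2'.
  rewrite -coset_morphM; try by apply: (subsetP HN).
  case: (preP (gmul g g')) => h3 h3'; apply/keyK => //; first exact: groupM.
  by rewrite h3' piM // h1' h2'.
Qed.
End Sec.

Definition GD8 : Grp := @MkGrp (dihedral_gtype 8) (fun u v => (u * v)%g) (fun u => u^-1)%g 1%g
  (@mulgA _) (@mul1g _) (@mulVg _).

Lemma gpowE (u : dihedral_gtype 8) n : @gpow GD8 u n = (u ^+ n)%g.
Proof. elim: n => [|n IH] /=; first by rewrite expg0. by rewrite IH expgS. Qed.

Definition asg (c0 c1 c2 c3 : nat * nat) (n : nat) : nat * nat :=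
  match n with 0 => c0 | 1 => c1 | 2 => c2 | 3 => c3 | _ => cone end.
Definition check4 (d : didentity) : bool :=
  all (fun c0 => all (fun c1 => all (fun c2 => all (fun c3 =>
    has (fun w => all (fun n => n <= 3) (wvars w) &&
                  (weval cmul cinv cone (asg c0 c1 c2 c3) w == cone)) d)
  codes8) codes8) codes8) codes8.

Section D8.
Variables x y : dihedral_gtype 8.
Hypotheses (oG : #|dihedral_gtype 8| = 8) (ox : #[x]%g = 4) (oy : #[y]%g = 2)
  (xy : (x ^ y = x^-1)%g) (nyx : y \notin <[x]>%g).

Local Notation psiD := (@psi GD8 x y).

Lemma hx4 : @gpow GD8 x 4 = gone GD8.
Proof. by rewrite gpowE; have := expg_order x; rewrite ox. Qed.
Lemma hy2 : @gmul GD8 y y = gone GD8.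
Proof. by change (y * y = 1)%g; rewrite -expg2; have := expg_order y; rewrite oy. Qed.
Lemma hxy : @gmul GD8 (@gmul GD8 x y) (@gmul GD8 x y) = gone GD8.
Proof.
change (x * y * (x * y) = 1)%g.
have yV : (y^-1 = y)%g by rewrite invg_expg oy expg1.
by rewrite -mulgA -{1}yV -conjgE xy mulgV.
Qed.

Lemma faithD : @faithful GD8 x y.
Proof.
case=> i j /andP[/= hi hj]; rewrite /psi /= !gpowE => h.
case: j hj h => [|[|j]] // _ h.
- rewrite expg0 mulg1 in h.
  have : #[x]%g %| i by rewrite order_dvdn h.
  by rewrite ox; case: i hi {h} => [|[|[|[|i]]]].
- rewrite expg1 in h.
  have hy : y = ((x ^+ i)^-1)%g by rewrite -(mulKg (x ^+ i)%g y) h mulg1.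
  by move: nyx; rewrite hy groupV mem_cycle.
Qed.

Lemma D8_omega8 : holds GD8 omega8.
Proof.
move=> s.
pose f (i : 'I_9) := s i.
have : ~ injective f by move=> /leq_card; rewrite card_ord oG.
move/not_all_ex_not => [i]; move/not_all_ex_not => [j] H0; have [hij nij] := imply_to_and _ _ H0.
rewrite /f in hij.
case: (ltngtP i j) => hl.
- exists (weq (Var i) (Var j)); first by apply: omega8_mem; rewrite // -ltnS.
  by rewrite /= hij; apply: (@gmulVr GD8).
- exists (weq (Var j) (Var i)); first by apply: omega8_mem; rewrite // -ltnS.
  by rewrite /= hij; apply: (@gmulVr GD8).
- by case: nij; apply: val_inj.
Qed.

Definition codeD (u : dihedral_gtype 8) : nat * nat :=
  nth cone codes8 (find (fun c => psiD c == u) codes8).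

Lemma codeDP u : cnorm (codeD u) /\ psiD (codeD u) = u.
Proof.
have [c [hc hcu]] := surj8 hx4 hy2 hxy D8_omega8 faithD u.
have hh : has (fun c => psiD c == u) codes8.
  by apply/hasP; exists c; [rewrite -cnormE | apply/eqP].
split; first by rewrite cnormE; apply: mem_nth; rewrite -has_find.
exact/eqP/(nth_find cone hh).
Qed.

Lemma codeD_psi c : cnorm c -> codeD (psiD c) = c.
Proof.
move=> hc; have [h1 h2] := codeDP (psiD c).
exact: (psi_inj hx4 hy2 hxy faithD h1 hc h2).
Qed.

Lemma D8_check d : check4 d -> holds GD8 d.
Proof.
move=> hc s.
pose c n := codeD (s n).
have hcn n : c n \in codes8 by rewrite -cnormE; case: (codeDP (s n)).
move/allP/(_ _ (hcn 0))/allP/(_ _ (hcn 1))/allP/(_ _ (hcn 2))/allP/(_ _ (hcn 3))/hasP: hc.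
case=> w hw /andP[hv /eqP hev].
exists w; first by apply/InP.
rewrite (@weval_ext _ _ _ _ s (fun n => psiD (asg (c 0) (c 1) (c 2) (c 3) n)) w).
  by rewrite (weval_psi hx4 hy2 hxy) hev psi_one.
move=> n hn; have := allP hv n hn; case: n {hn} => [|[|[|[|n]]]] // _; symmetry; exact: (proj2 (codeDP _)).
Qed.

Lemma codeD_mul u v : codeD (u * v)%g = cmul (codeD u) (codeD v).
Proof.
have h := psiM hx4 hy2 hxy (codeD u) (codeD v).
rewrite (proj2 (codeDP u)) (proj2 (codeDP v)) in h.
change (psiD (cmul (codeD u) (codeD v)) = (u * v)%g) in h.
by rewrite -h codeD_psi //; apply: cmul_norm.
Qed.

Lemma sec_codes (G : Grp) (a b : G) :
  gpow a 4 = gone G -> gmul b b = gone G -> gmul (gmul a b) (gmul a b) = gone G ->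
  (forall z, exists c, cnorm c /\ psi a b c = z) -> iso_section (dihedral_gtype 8) G.
Proof.
move=> ha hb hab hs.
apply: (@sec_main G [set: dihedral_gtype 8]%G (fun u => psi a b (codeD u))).
- by move=> u v _ _; rewrite codeD_mul (psiM ha hb hab).
- move=> z; have [c [hc <-]] := hs z; exists (psiD c); split; first by rewrite inE.
  by rewrite codeD_psi.
Qed.

Lemma sec_C4 (G : Grp) (a : G) : gpow a 4 = gone G ->
  (forall z, exists i, i < 4 /\ gpow a i = z) -> iso_section (dihedral_gtype 8) G.
Proof.
move=> ha hs.
have hb : gmul (gone G) (gone G) = gone G by rewrite gmul1.
have hcx u : u \in <[x]>%g -> (codeD u).2 = 0.
  case/cycleP => m ->.
  have -> : (x ^+ m)%g = psiD (m %% 4, 0).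
    rewrite /psi /= !gpowE ?expg0 ?mulg1; have := expg_mod_order x m; rewrite ox => ->.
    by [].
  by rewrite codeD_psi // /cnorm /= ltn_mod.
apply: (@sec_main G <[x]>%G (fun u => psi a (gone G) (codeD u))).
- by move=> u v hu hv; rewrite codeD_mul (psiM0 ha hb) // hcx.
- move=> z; have [i [hi <-]] := hs z; exists (psiD (i, 0)); split.
    by rewrite /psi /= !gpowE ?expg0 ?mulg1 mem_cycle.
  rewrite codeD_psi; last by rewrite /cnorm /= hi.
  by rewrite /psi /= gmul1r.
Qed.

End D8.

Section GSide.
Variable G : Grp.
Local Notation "x ** y" := (gmul x y) (at level 40, left associativity).
Local Notation e := (gone G).

Lemma id2P : holds G id2 -> forall x : G, gpow x 4 = e.
Proof.
move=> h x; have [w hw] := h (fun _ => x).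
case: hw => [<-|[]] /=; rewrite gmul1r.
by rewrite !gmulA.
Qed.

Lemma id3P : holds G id3 -> forall x1 x2 x3 : G,
  x1 ** x1 = e \/ x2 ** x2 = e \/ x3 ** x3 = e \/ x1 = x2 \/ x1 = x3 \/ x2 = x3.
Proof.
move=> h x1 x2 x3.
have [w hw hev] := h (fun n => if n == 1 then x1 else if n == 2 then x2 else x3).
case: hw hev => [<-|[<-|[<-|[<-|[<-|[<-|[]]]]]]] /= hev.
- by left.
- by right; left.
- by do 2 right; left.
- by do 3 right; left; apply: eq_mulV.
- by do 4 right; left; apply: eq_mulV.
- by do 5 right; apply: eq_mulV.
Qed.

Section Klein.
Hypothesis hsq : forall t : G, t ** t = e.

Lemma gcomm (t t' : G) : t ** t' = t' ** t.
Proof.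
have h1 : ginv (t ** t') = t ** t' := inv_uniq (hsq _).
by rewrite ginvM (inv_uniq (hsq t)) (inv_uniq (hsq t')) in h1.
Qed.

Lemma comm4 (p q p' q' : G) : (p ** q) ** (p' ** q') = (p ** p') ** (q ** q').
Proof. by rewrite -!gmulA (gmulA q) (gcomm q p') -(gmulA p'). Qed.

Definition pw (t : G) (b : bool) := if b then t else e.
Lemma pw_mul t b b' : pw t b ** pw t b' = pw t (b (+) b').
Proof. by case: b; case: b' => /=; rewrite ?gmul1 ?gmul1r ?hsq. Qed.

Variables u v z : G.
Definition psi3 (p : bool * bool * bool) := (pw u p.1.1 ** pw v p.1.2) ** pw z p.2.
Definition xor3 (p q : bool * bool * bool) : bool * bool * bool :=
  (p.1.1 (+) q.1.1, p.1.2 (+) q.1.2, p.2 (+) q.2).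

Lemma psi3M p q : psi3 (xor3 p q) = psi3 p ** psi3 q.
Proof. by rewrite /psi3 [RHS]comm4 (comm4 (pw u _)) !pw_mul. Qed.
Lemma psi3V p : psi3 ((fun r => r) p) = ginv (psi3 p).
Proof. by symmetry; apply: inv_uniq; apply: hsq. Qed.
Lemma psi3_one : psi3 (false, false, false) = e.
Proof. by rewrite /psi3 /= !gmul1. Qed.

Lemma sq_inv (t t' : G) : t ** t' = e -> t' = t.
Proof. by move=> h; rewrite -(inv_uniq h) (inv_uniq (hsq t)). Qed.

Hypotheses (hu : u <> e) (hv : v <> e) (huv : v <> u) (hz : z <> e)
  (hzu : z <> u) (hzv : z <> v) (hzuv : z <> u ** v).

Lemma faith3 p : psi3 p = e -> p = (false, false, false).
Proof.
case: p => [[[] []] []]; rewrite /psi3 /= ?gmul1 ?gmul1r => h //; exfalso;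
  first [ exact: hu h | exact: hv h | exact: hz h | exact: huv (sq_inv h)
        | exact: hzu (sq_inv h) | exact: hzv (sq_inv h) | exact: hzuv (sq_inv h) ].
Qed.

Definition parv (n : nat) : bool * bool * bool :=
  match n with 1 => (true, false, false) | 2 => (false, true, false)
  | 3 => (false, false, true) | _ => (false, false, false) end.

Lemma id4_klein : holds G id4 -> False.
Proof.
move=> h; have [w hw hev] := h (fun n => psi3 (parv n)).
rewrite (weval_hom psi3M psi3V psi3_one) in hev.
have := faith3 hev.
have chk : all (fun w => weval xor3 (fun r => r) (false, false, false) parv w
                          != (false, false, false)) id4 by vm_compute.
by move/allP: chk => /(_ w (proj1 (InP _ _) hw)) /eqP.
Qed.
End Klein.
End GSide.

Lemma chk2 : check4 id2. Proof. by vm_compute. Qed.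
Lemma chk3 : check4 id3. Proof. by vm_compute. Qed.
Lemma chk4 : check4 id4. Proof. by vm_compute. Qed.

Theorem proposition1 :
  (fholds 'D_8 omega8 /\ fholds 'D_8 id2 /\ fholds 'D_8 id3 /\ fholds 'D_8 id4) /\
  (forall G : Grp, holds G omega8 -> holds G id2 -> holds G id3 -> holds G id4 ->
     iso_section 'D_8 G).
Proof.
have [x [y [oG ox oy xy nyx]]] := D8_gens.
have hD d : check4 d -> fholds 'D_8 d.
  by move=> hc; exact: (D8_check oG ox oy xy nyx hc).
split.
  split; first exact: (D8_omega8 oG).
  by split; [exact: hD chk2 | split; [exact: hD chk3 | exact: hD chk4]].
move=> G Ho H2 H3 H4.
have h4 := id2P H2.
have sc := sec_codes oG ox oy xy nyx.
case: (classic (exists a : G, gmul a a <> gone G)) => [[a ha]|hna].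
- have ha1 : a <> gone G by move=> h; apply: ha; rewrite h gmul1.
  have ha3 : gpow a 3 <> gone G.
    move=> h; apply: ha1; have := h4 a.
    by change (gmul a (gpow a 3) = gone G -> a = gone G); rewrite h gmul1r.
  case: (classic (exists b : G, forall i, i < 4 -> b <> gpow a i)) => [[b hb]|hnb].
  + have hb1 : b <> a by move=> h; apply: (hb 1 isT); rewrite h /= gmul1r.
    have hb3 : b <> gpow a 3 by apply: hb.
    have ha3' : a <> gpow a 3.
      move=> h; apply: ha; have := h4 a.
      by change (gmul a (gpow a 3) = gone G -> gmul a a = gone G); rewrite -h.
    have hsq3 : gmul (gpow a 3) (gpow a 3) <> gone G.
      by rewrite -gpowD (gpow_mod _ (h4 a)) /= gmul1r.
    have hbb : gmul b b = gone G.
      case: (id3P H3 a (gpow a 3) b) => [h|[h|[h|[h|[h|h]]]]].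
      * by case: ha.
      * by case: hsq3.
      * by [].
      * by case: ha3'.
      * by case: hb1; rewrite h.
      * by case: hb3; rewrite h.
    have hab : gmul (gmul a b) (gmul a b) = gone G.
      case: (id3P H3 a (gpow a 3) (gmul a b)) => [h|[h|[h|[h|[h|h]]]]].
      * by case: ha.
      * by case: hsq3.
      * by [].
      * by case: ha3'.
      * case: (hb 0 isT); symmetry; apply: (@gmulI _ a); by rewrite /= gmul1r.
      * case: (hb 2 isT); symmetry; exact: (@gmulI _ a _ _ h).
    have hf : faithful a b.
      case=> i j /andP[/= hi hj]; rewrite /psi /=.
      case: j hj => [|[|j]] // _.
      * rewrite gmul1r.
        case: i hi => [|[|[|[|i]]]] // _ h.
        -- by case: ha1; rewrite /= gmul1r in h.
        -- by case: ha; rewrite /= gmul1r in h.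
      * rewrite [gpow b 1]/= gmul1r => h.
        case: (hb ((4 - i) %% 4)); first by rewrite ltn_mod.
        rewrite -(inv_uniq h); apply: inv_uniq.
        by rewrite -(gpow_mod _ (h4 a)) -gpowD subnKC ?h4 // ltnW.
    exact: (sc G a b (h4 a) hbb hab (surj8 (h4 a) hbb hab Ho hf)).
  + apply: (sec_C4 oG ox oy xy nyx (h4 a)) => z.
    apply: NNPP => hz; apply: hnb; exists z => i hi hzi; apply: hz.
    by exists i; split; [done | rewrite hzi].
- have hsq : forall t : G, gmul t t = gone G.
    by move=> t; apply: NNPP => ht; apply: hna; exists t.
  have h1sq : gmul (gone G) (gone G) = gone G by rewrite gmul1.
  have g14 : gpow (gone G) 4 = gone G by rewrite gpow1.
  case: (classic (exists u : G, u <> gone G)) => [[u hu]|hnu].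
  + case: (classic (exists v : G, v <> gone G /\ v <> u)) => [[v [hv hvu]]|hnv].
    * have hu4 : gpow u 4 = gone G by rewrite /= gmul1r hsq gmul1r hsq.
      apply: (sc G u v hu4 (hsq v) (hsq _)) => z.
      case: (classic (z = gone G)) => [->|hz]; first by exists (0,0); split => //; rewrite /psi /= gmul1.
      case: (classic (z = u)) => [->|hzu]; first by exists (1,0); split => //; rewrite /psi /= !gmul1r.
      case: (classic (z = v)) => [->|hzv]; first by exists (0,1); split => //; rewrite /psi /= gmul1 gmul1r.
      case: (classic (z = gmul u v)) => [->|hzuv]; first by exists (1,1); split => //; rewrite /psi /= !gmul1r.
      by case: (id4_klein hsq hu hv hvu hz hzu hzv hzuv H4).
    * apply: (sc G (gone G) u g14 (hsq u) (hsq _)) => z.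
      case: (classic (z = gone G)) => [->|hz]; first by exists (0,0); split => //; rewrite /psi /= gmul1.
      have hzu : z = u by apply: NNPP => hzu; apply: hnv; exists z.
      by exists (0,1); split => //; rewrite /psi /= gmul1 gmul1r hzu.
  + apply: (sc G (gone G) (gone G) g14 h1sq (hsq _)) => z.
    exists (0,0); split => //; rewrite /psi /= gmul1.
    by apply: NNPP => hz; apply: hnu; exists z => h; apply: hz; rewrite h.
Qed.
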